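(* Let $K$ be a field of characteristic zero, $W_n$ the Witt Lie algebra and $\sigma\in\mathrm{Aut}_{\mathrm{Lie}}(W_n)$. Then $A_\sigma\in\mathrm{GL}_n(\mathbb{Z})$.
   Context: $W_n=\mathrm{Der}_K(K[x_1^{\pm1},\ldots,x_n^{\pm1}])$, $\mathcal{H}_n=\bigoplus_iKH_i$, $H_i=x_i\partial_i$. Every Lie automorphism $\sigma$ of $W_n$ satisfies $\sigma(\mathcal{H}_n)=\mathcal{H}_n$, and $A_\sigma=(a_{ij})\in\mathrm{GL}_n(K)$ is the unique matrix with $\sigma(H_i)=\sum_ja_{ij}H_j$ for all $i$. *)

(* Defs.v *)
From HB Require Import structures.
From mathcomp Require Import all_boot all_order all_algebra.
From mathcomp Require Import finmap.
From mathcomp.multinomials Require Import monalg.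
Set Implicit Arguments. Unset Strict Implicit. Unset Printing Implicit Defensive.
Import Order.TTheory GRing.Theory Num.Theory.
Local Open Scope ring_scope.

(* The Laurent polynomial ring K[x_1^{±1},...,x_n^{±1}]: finitely supported
   functions Z^n -> K; the monomial x^a (a ∈ Z^n) is << 1 *g a >>.
   Its K-vector-space structure is the one of {malg ...}. *)
Definition laurent (K : fieldType) (n : nat) := {malg K['rV[int]_n]}.

Definition lmul (K : fieldType) (n : nat) (f g : laurent K n) : laurent K n :=
  \sum_(a <- msupp f) \sum_(b <- msupp g) << f@_a * g@_b *g (a + b) >>.

(* K-derivations of the Laurent polynomial ring; W_n = Der_K(...) is the set of
   maps D satisfying is_der, with Lie bracket [D1,D2] = D1 D2 - D2 D1. *)
Definition is_der (K : fieldType) (n : nat) (D : laurent K n -> laurent K n) : Prop :=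
  (forall (c : K) (f g : laurent K n), D (c *: f + g) = c *: D f + D g) /\
  (forall f g : laurent K n, D (lmul f g) = lmul (D f) g + lmul f (D g)).

Definition der_add (K : fieldType) (n : nat) (D1 D2 : laurent K n -> laurent K n) :=
  fun f => D1 f + D2 f.
Definition der_scale (K : fieldType) (n : nat) (c : K) (D : laurent K n -> laurent K n) :=
  fun f => c *: D f.
Definition der_bracket (K : fieldType) (n : nat) (D1 D2 : laurent K n -> laurent K n) :=
  fun f => D1 (D2 f) - D2 (D1 f).

(* H_i = x_i ∂_i : x^a |-> a_i x^a *)
Definition H (K : fieldType) (n : nat) (i : 'I_n) : laurent K n -> laurent K n :=
  fun f => \sum_(a <- msupp f) << (a ord0 i)%:~R * f@_a *g a >>.

(* sigma is a Lie algebra automorphism of W_n (a map defined on all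
   maps L -> L; only its restriction to W_n matters). *)
Definition is_lie_aut (K : fieldType) (n : nat)
  (s : (laurent K n -> laurent K n) -> (laurent K n -> laurent K n)) : Prop :=
  [/\ forall D, is_der D -> is_der (s D),
      forall c D1 D2, is_der D1 -> is_der D2 ->
        s (der_add (der_scale c D1) D2) = der_add (der_scale c (s D1)) (s D2),
      forall D1 D2, is_der D1 -> is_der D2 ->
        s (der_bracket D1 D2) = der_bracket (s D1) (s D2),
      forall D1 D2, is_der D1 -> is_der D2 -> s D1 = s D2 -> D1 = D2 &
      forall E, is_der E -> exists2 D, is_der D & s D = E].

Definition is_A_sigma (K : fieldType) (n : nat)
  (s : (laurent K n -> laurent K n) -> (laurent K n -> laurent K n)) (a : 'M[K]_n) : Prop :=
  forall i : 'I_n, s (H i) = fun f => \sum_(j < n) a i j *: H j f.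

Definition in_GLnZ (K : fieldType) (n : nat) (a : 'M[K]_n) : Prop :=
  exists2 B : 'M[int]_n, B \in unitmx & a = map_mx (fun z : int => z%:~R) B.

(* Main.v *)
From HB Require Import structures.
Require Import Defs.
From mathcomp Require Import all_boot all_order all_algebra.
From mathcomp Require Import finmap ring.
From mathcomp.multinomials Require Import monalg.
From Stdlib Require Import FunctionalExtensionality ClassicalEpsilon Classical.
Set Implicit Arguments. Unset Strict Implicit. Unset Printing Implicit Defensive.
Import Order.TTheory GRing.Theory Num.Theory.
Local Open Scope fset_scope.
Local Open Scope ring_scope.


Section Lmul.
Variables (K : fieldType) (n : nat).
Local Notation L := (laurent K n).
Implicit Types (f g : L).

Lemma lmulw (d1 d2 : {fset 'rV[int]_n}) f g :
  msupp f `<=` d1 -> msupp g `<=` d2 ->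
  lmul f g = \sum_(a <- d1) \sum_(b <- d2) << f@_a * g@_b *g (a + b) >>.
Proof.
move=> le_d1 le_d2; rewrite /lmul (big_fset_incl _ le_d1) /=.
  apply/eq_bigr=> k1 _; apply/big_fset_incl => // k _ /mcoeff_outdom ->.
  by rewrite mulr0 monalgU0.
move=> k _ /mcoeff_outdom g1k.
by rewrite big1 => // k' _; rewrite g1k mul0r monalgU0.
Qed.

Lemma lmul0f g : lmul 0 g = 0.
Proof. by rewrite /lmul msupp0 big_seq_fset0. Qed.
Lemma lmulf0 f : lmul f 0 = 0.
Proof. by rewrite /lmul msupp0; apply: big1 => a _; rewrite big_seq_fset0. Qed.

Lemma lmulDl f1 f2 g : lmul (f1 + f2) g = lmul f1 g + lmul f2 g.
Proof.
rewrite (@lmulw (msupp f1 `|` msupp f2) (msupp g) f1 g) ?fsubsetUl //.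
rewrite (@lmulw (msupp f1 `|` msupp f2) (msupp g) f2 g) ?fsubsetUr //.
rewrite (@lmulw (msupp f1 `|` msupp f2) (msupp g)) ?msuppD_le //.
rewrite -big_split /=; apply/eq_bigr=> k1 _.
rewrite -big_split /=; apply/eq_bigr=> k2 _.
by rewrite mcoeffD mulrDl monalgUD.
Qed.

Lemma lmulDr f g1 g2 : lmul f (g1 + g2) = lmul f g1 + lmul f g2.
Proof.
rewrite (@lmulw (msupp f) (msupp g1 `|` msupp g2) f g1) ?fsubsetUl //.
rewrite (@lmulw (msupp f) (msupp g1 `|` msupp g2) f g2) ?fsubsetUr //.
rewrite (@lmulw (msupp f) (msupp g1 `|` msupp g2)) ?msuppD_le //.
rewrite -big_split /=; apply/eq_bigr=> k1 _.
rewrite -big_split /=; apply/eq_bigr=> k2 _.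
by rewrite mcoeffD mulrDr monalgUD.
Qed.

Lemma monalgUZ (c x : K) (k : 'rV[int]_n) : << c * x *g k >> = c *: (<< x *g k >> : L).
Proof.
apply/malgP => p; rewrite mcoeffZ [LHS]mcoeffU [in RHS]mcoeffU.
by case: eqP => _; rewrite ?mulr0n ?mulr1n ?mulr0.
Qed.

Lemma lmulZl c f g : lmul (c *: f) g = c *: lmul f g.
Proof.
rewrite (@lmulw (msupp f) (msupp g)) ?msuppZ_le // /lmul scaler_sumr.
apply/eq_bigr=> k1 _; rewrite scaler_sumr; apply/eq_bigr=> k2 _.
by rewrite mcoeffZ -mulrA monalgUZ.
Qed.

Lemma lmulZr c f g : lmul f (c *: g) = c *: lmul f g.
Proof.
rewrite (@lmulw (msupp f) (msupp g)) ?msuppZ_le // /lmul scaler_sumr.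
apply/eq_bigr=> k1 _; rewrite scaler_sumr; apply/eq_bigr=> k2 _.
by rewrite mcoeffZ mulrCA monalgUZ.
Qed.

Lemma lmulUU c1 c2 k1 k2 :
  lmul (<< c1 *g k1 >> : L) << c2 *g k2 >> = << c1 * c2 *g k1 + k2 >>.
Proof. by rewrite (lmulw msuppU_le msuppU_le) !big_seq_fset1 !mcoeffUU. Qed.


Lemma sum_pick f (F : 'rV[int]_n -> K) q :
  (forall a, a \notin msupp f -> F a = 0) ->
  \sum_(a <- msupp f) F a *+ (a == q) = F q.
Proof.
move=> F0; have [qf|qnf] := boolP (q \in msupp f).
  rewrite (big_fsetD1 q) //= eqxx mulr1n big1_fset ?addr0 // => k.
  by rewrite in_fsetD1 => /andP[/negPf -> _]; rewrite mulr0n.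
rewrite F0 // big1_fset // => k kf _.
by case: eqP => [kq|]; rewrite ?mulr0n // kq F0.
Qed.

Lemma mcoeffH i f p : (H i f)@_p = (p ord0 i)%:~R * f@_p.
Proof.
rewrite /H raddf_sum /=.
under eq_bigr do rewrite mcoeffU.
apply: (sum_pick (F := fun a => (a ord0 i)%:~R * f@_a)) => a /mcoeff_outdom ->.
by rewrite mulr0.
Qed.

Lemma HD i f g : H i (f + g) = H i f + H i g.
Proof.
apply/malgP => p.
rewrite [LHS]mcoeffH [RHS]mcoeffD [X in _ = X + _]mcoeffH [X in _ = _ + X]mcoeffH.
by rewrite [in LHS]mcoeffD mulrDr.
Qed.
Lemma HZ i c f : H i (c *: f) = c *: H i f.
Proof.
apply/malgP => p; rewrite [LHS]mcoeffH [RHS]mcoeffZ [in RHS]mcoeffH.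
by rewrite [in LHS]mcoeffZ mulrCA.
Qed.
Lemma HU i c a : H i (<< c *g a >> : L) = << (a ord0 i)%:~R * c *g a >>.
Proof.
apply/malgP => p; rewrite [LHS]mcoeffH [in LHS]mcoeffU [RHS]mcoeffU.
by case: eqP => [->|_]; rewrite ?mulr0n ?mulr1n ?mulr0.
Qed.
Lemma mcoeffX b g p : (lmul (<< 1 *g b >> : L) g)@_p = g@_(p - b).
Proof.
rewrite (lmulw msuppU_le (fsubset_refl _)) big_seq_fset1 raddf_sum /=.
under eq_bigr do rewrite mcoeffUU mul1r mcoeffU.
rewrite -(@sum_pick g (fun a => g@_a) (p - b)); last first.
  by move=> a /mcoeff_outdom.
apply: eq_bigr => a _; congr (_ *+ _).
suff -> : (b + a == p) = (a == p - b) by [].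
apply/idP/idP => [/eqP <- | /eqP ->]; apply/eqP; [by rewrite addrC addKr | by rewrite addrC subrK].
Qed.
End Lmul.

Lemma lm_ex : { m : forall (K : fieldType) (n : nat), laurent K n -> laurent K n -> laurent K n
  | forall K n, @lmul K n = m K n }.
Proof. by exists (@lmul). Qed.
Definition lm := proj1_sig lm_ex.
Lemma lmE K n : @lmul K n = @lm K n. Proof. exact: (proj2_sig lm_ex). Qed.
Lemma H_ex : { m : forall (K : fieldType) (n : nat), 'I_n -> laurent K n -> laurent K n
  | forall K n, @H K n = m K n }.
Proof. by exists (@H). Qed.
Definition Hl := proj1_sig H_ex.
Lemma HlE K n : @H K n = @Hl K n. Proof. exact: (proj2_sig H_ex). Qed.

Section Locked.
Variables (K : fieldType) (n : nat).
Local Notation L := (laurent K n).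
Implicit Types (f g : L).
Local Notation lm := (@lm K n).
Local Notation Hl := (@Hl K n).

Lemma lm0f g : lm 0 g = 0. Proof. by rewrite -lmE lmul0f. Qed.
Lemma lmf0 f : lm f 0 = 0. Proof. by rewrite -lmE lmulf0. Qed.
Lemma lmDl f1 f2 g : lm (f1 + f2) g = lm f1 g + lm f2 g. Proof. by rewrite -lmE lmulDl. Qed.
Lemma lmDr f g1 g2 : lm f (g1 + g2) = lm f g1 + lm f g2. Proof. by rewrite -lmE lmulDr. Qed.
Lemma lmZl c f g : lm (c *: f) g = c *: lm f g. Proof. by rewrite -lmE lmulZl. Qed.
Lemma lmZr c f g : lm f (c *: g) = c *: lm f g. Proof. by rewrite -lmE lmulZr. Qed.
Lemma lmUU c1 c2 k1 k2 :
  lm (<< c1 *g k1 >> : L) << c2 *g k2 >> = << c1 * c2 *g k1 + k2 >>.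
Proof. by rewrite -lmE lmulUU. Qed.
Lemma mcoeffHl i f p : (Hl i f)@_p = (p ord0 i)%:~R * f@_p.
Proof. by rewrite -HlE mcoeffH. Qed.
Lemma HlD i f g : Hl i (f + g) = Hl i f + Hl i g. Proof. by rewrite -HlE HD. Qed.
Lemma HlZ i c f : Hl i (c *: f) = c *: Hl i f. Proof. by rewrite -HlE HZ. Qed.
Lemma HlU i c a : Hl i (<< c *g a >> : L) = << (a ord0 i)%:~R * c *g a >>.
Proof. by rewrite -HlE HU. Qed.
Lemma mcoeffXl b g p : (lm (<< 1 *g b >> : L) g)@_p = g@_(p - b).
Proof. by rewrite -lmE mcoeffX. Qed.
End Locked.

Lemma mono_ex : { m : forall (K : fieldType) (n : nat), K -> 'rV[int]_n -> laurent K n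
  | forall K n c a, (<< c *g a >> : laurent K n) = m K n c a }.
Proof. by exists (fun K n c a => << c *g a >>). Qed.
Definition mono := proj1_sig mono_ex.
Lemma monoE (K : fieldType) n (c : K) (a : 'rV[int]_n) : (<< c *g a >> : laurent K n) = mono c a.
Proof. exact: (proj2_sig mono_ex). Qed.

Section Mono.
Variables (K : fieldType) (n : nat).
Local Notation L := (laurent K n).
Implicit Types (f g : L).
Local Notation lm := (@lm K n).
Local Notation Hl := (@Hl K n).
Local Notation mono := (@mono K n).

Lemma monalgE' g : g = \sum_(k <- msupp g) mono (g@_k) k.
Proof. rewrite {1}[g]monalgE; apply: eq_bigr => k _; exact: monoE. Qed.
Lemma lmMM c1 c2 k1 k2 : lm (mono c1 k1) (mono c2 k2) = mono (c1 * c2) (k1 + k2).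
Proof. by rewrite -!monoE lmUU. Qed.
Lemma HlM i c a : Hl i (mono c a) = mono ((a ord0 i)%:~R * c) a.
Proof. by rewrite -!monoE HlU. Qed.
Lemma monoD c d a : mono c a + mono d a = mono (c + d) a.
Proof. by rewrite -!monoE monalgUD. Qed.
Lemma mcoeffM c a p : (mono c a)@_p = c *+ (a == p).
Proof. by rewrite -monoE mcoeffU. Qed.
End Mono.

Section S.
Variables (K : fieldType) (n : nat).
Local Notation L := (laurent K n).
Implicit Types (f g : L) (D : L -> L).
Local Notation lm := (@lm K n).
Local Notation Hl := (@Hl K n).
Local Notation mono := (@mono K n).

Definition isd D :=
  (forall (c : K) f g, D (c *: f + g) = c *: D f + D g) /\
  (forall f g, D (lm f g) = lm (D f) g + lm f (D g)).
Lemma is_derE D : is_der D <-> isd D.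
Proof. by rewrite /is_der /isd lmE. Qed.

Lemma dbl0 (x : L) : x = x + x -> x = 0.
Proof. by move/(congr1 (fun y => y - x)); rewrite addrK subrr. Qed.

Definition Leib D f g := D (lm f g) = lm (D f) g + lm f (D g).

Lemma der0 D : isd D -> D 0 = 0.
Proof. case=> lin _; have := lin 1 0 0; rewrite !scale1r addr0; exact: dbl0. Qed.
Lemma derD D : isd D -> forall f g, D (f + g) = D f + D g.
Proof. by case=> lin _ f g; have := lin 1 f g; rewrite !scale1r. Qed.
Lemma derZ D : isd D -> forall c f, D (c *: f) = c *: D f.
Proof. by move=> dD c f; have [lin _] := dD; rewrite -[c *: f]addr0 lin der0 // addr0. Qed.

Lemma leib_ext D : (forall f g, D (f + g) = D f + D g) ->
  (forall a b (c d : K), Leib D (mono c a) (mono d b)) ->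
  forall f g, Leib D f g.
Proof.
move=> DD Dm.
have D0 : D 0 = 0.
  by have := DD 0 0; rewrite addr0; exact: dbl0.
have addl f1 f2 g : Leib D f1 g -> Leib D f2 g -> Leib D (f1 + f2) g.
  rewrite /Leib => h1 h2; rewrite lmDl DD h1 h2 DD !lmDl.
  by rewrite addrACA.
have addr f g1 g2 : Leib D f g1 -> Leib D f g2 -> Leib D f (g1 + g2).
  rewrite /Leib => h1 h2; rewrite lmDr DD h1 h2 DD !lmDr.
  by rewrite addrACA.
have zl g : Leib D 0 g by rewrite /Leib lm0f D0 !lm0f addr0.
have zr f : Leib D f 0 by rewrite /Leib lmf0 D0 !lmf0 addr0.
have sl (s : seq 'rV[int]_n) (F : 'rV[int]_n -> L) g :
    (forall a, Leib D (F a) g) -> Leib D (\sum_(a <- s) F a) g.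
  move=> hF; elim: s => [|a s IH]; first by rewrite big_nil.
  by rewrite big_cons; apply: addl.
have sr (s : seq 'rV[int]_n) (F : 'rV[int]_n -> L) f :
    (forall a, Leib D f (F a)) -> Leib D f (\sum_(a <- s) F a).
  move=> hF; elim: s => [|a s IH]; first by rewrite big_nil.
  by rewrite big_cons; apply: addr.
move=> f g; rewrite [f]monalgE' [g]monalgE'.
apply: sl => a; apply: sr => b; exact: Dm.
Qed.

Lemma H_der k : isd (Hl k).
Proof.
split; first by move=> c f g; rewrite HlD HlZ.
apply: leib_ext => [f g|a b c d]; first exact: HlD.
rewrite /Leib !lmMM !HlM !lmMM monoD.
congr (mono _ _).
rewrite mxE intrD; ring.
Qed.

Definition Eop (b : 'rV[int]_n) (k : 'I_n) : L -> L :=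
  fun f => lm (mono 1 b) (Hl k f).

Lemma E_der b k : isd (Eop b k).
Proof.
split; first by move=> c f g; rewrite /Eop HlD HlZ lmDr lmZr.
apply: leib_ext => [f g|a b' c d]; first by rewrite /Eop HlD lmDr.
rewrite /Leib /Eop !lmMM !HlM !lmMM.
rewrite -addrA (addrCA a b b') monoD.
congr (mono _ _).
rewrite mxE intrD; ring.
Qed.

Lemma lmBl x y g : lm (x - y) g = lm x g - lm y g.
Proof. by rewrite lmDl -scaleN1r lmZl scaleN1r. Qed.
Lemma lmBr f x y : lm f (x - y) = lm f x - lm f y.
Proof. by rewrite lmDr -scaleN1r lmZr scaleN1r. Qed.
Lemma zid (V : zmodType) (a b c d e h : V) :
  (a + b) + (c + d) - ((e + c) + (b + h)) = (a - e) + (d - h).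
Proof.
rewrite (addrC c d) (addrACA a b d c) (addrC b h) (addrACA e c h b) (addrC c b).
by rewrite (opprD (e + h)) (addrACA (a + d) (b + c) (- (e + h))) subrr addr0 opprD addrACA.
Qed.

Lemma bracket_der D1 D2 : isd D1 -> isd D2 -> isd (der_bracket D1 D2).
Proof.
move=> d1 d2; split.
  move=> c f g; rewrite /der_bracket.
  rewrite !(derD d1, derD d2, derZ d1, derZ d2) scalerBr.
  by rewrite addrACA opprD.
move=> f g; rewrite /der_bracket.
have [_ l1] := d1; have [_ l2] := d2.
rewrite l2 l1 !(derD d1) !(derD d2) !l1 !l2 lmBl lmBr; apply: zid.
Qed.

Lemma scale_der c D : isd D -> isd (der_scale c D).
Proof.
move=> d; split => [c' f g|f g]; rewrite /der_scale.
  by rewrite (derD d) (derZ d) scalerDr !scalerA mulrC.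
by have [_ l] := d; rewrite l scalerDr lmZl lmZr.
Qed.

Lemma zero_der : isd (fun _ : L => 0).
Proof. by split => [c f g|f g]; rewrite ?scaler0 ?addr0 ?lm0f ?lmf0 ?addr0. Qed.
End S.

Section S.
Variables (K : fieldType) (n : nat).
Local Notation L := (laurent K n).
Implicit Types (f g : L) (D E : L -> L).
Local Notation lm := (@lm K n).
Local Notation Hl := (@Hl K n).
Local Notation mono := (@mono K n).

Lemma mono_scale c a : mono c a = c *: mono 1 a.
Proof. by rewrite -!monoE -{1}[c]mulr1 monalgUZ. Qed.

Lemma mono_neq0 c a : c != 0 -> mono c a != 0.
Proof.
move=> c0; apply/eqP => /(congr1 (mcoeff a)); rewrite mcoeffM eqxx mcoeff0.
by move/eqP; rewrite mulr1n (negPf c0).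
Qed.

Lemma der_sum E (I : Type) (r : seq I) (F : I -> L) : isd E ->
  E (\sum_(i <- r) F i) = \sum_(i <- r) E (F i).
Proof. by move=> d; apply: big_morph; [exact: derD | exact: der0]. Qed.

Lemma der_zero E : isd E -> (forall m, E (mono 1 m) = 0) -> forall f, E f = 0.
Proof.
move=> d h f; rewrite [f]monalgE' der_sum //; apply: big1 => k _.
by rewrite mono_scale (derZ d) h scaler0.
Qed.

Lemma mcoeff_sumZH (al : 'I_n -> K) g q :
  (\sum_j al j *: Hl j g)@_q = (\sum_j al j * (q ord0 j)%:~R) * g@_q.
Proof.
rewrite raddf_sum /= mulr_suml; apply: eq_bigr => j _.
by rewrite mcoeffZ mcoeffHl mulrA.
Qed.

Lemma weight E (Lop : L -> L) (al : 'I_n -> K) w m p :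
  (forall c f, E (c *: f) = c *: E f) ->
  (forall g q, (Lop g)@_q = (\sum_j al j * (q ord0 j)%:~R) * g@_q) ->
  (E (mono 1 m))@_p != 0 ->
  Lop (E (mono 1 m)) - E (Lop (mono 1 m)) = w *: E (mono 1 m) ->
  \sum_j al j * ((p - m) ord0 j)%:~R = w.
Proof.
move=> EZ hL nz heq.
have hm : Lop (mono 1 m) = (\sum_j al j * (m ord0 j)%:~R) *: mono 1 m.
  apply/malgP => q; rewrite hL mcoeffZ !mcoeffM.
  by case: eqP => [->|_]; rewrite ?mulr0n ?mulr0.
move: heq; rewrite hm EZ => /(congr1 (mcoeff p)).
rewrite mcoeffB hL !mcoeffZ -mulrBl => /mulIf => /(_ nz) <-.
rewrite -sumrB; apply: eq_bigr => j _.
by rewrite -mulrBr !mxE intrB.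
Qed.

Lemma mcoeffXm b g p : (lm (mono 1 b) g)@_p = g@_(p - b).
Proof. by rewrite -monoE mcoeffXl. Qed.

Lemma Eop_comm b k i f :
  Hl i (Eop b k f) - Eop b k (Hl i f) = (b ord0 i)%:~R *: Eop b k f.
Proof.
apply/malgP => p; rewrite /Eop mcoeffB mcoeffZ mcoeffHl !mcoeffXm !mcoeffHl.
rewrite !mxE intrB; ring.
Qed.

Lemma Eop_mono b k c m :
  Eop b k (mono c m) = mono (1 * ((m ord0 k)%:~R * c)) (b + m).
Proof. by rewrite /Eop HlM lmMM. Qed.

End S.


Lemma intr_inj0 (F : fieldType) : [pchar F] =i pred0 ->
  forall z w : int, (z%:~R : F) = w%:~R -> z = w.
Proof.
move=> h z w /eqP; rewrite -subr_eq0 -intrB => /eqP hz; apply/eqP.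
rewrite -subr_eq0; move: hz; case: (z - w) => k.
  by move/eqP; rewrite (pcharf0P F).1.
rewrite NegzE intrN => /eqP; rewrite oppr_eq0 (pcharf0P F).1 //.
Qed.

Theorem corollary2p7 (K : fieldType) (n : nat) (hK : [pchar K] =i pred0)
  (s : (laurent K n -> laurent K n) -> (laurent K n -> laurent K n))
  (a : 'M[K]_n) :
  is_lie_aut s -> is_A_sigma s a -> in_GLnZ a.
Proof.
move=> [sD slin sbr sinj ssurj]; rewrite /is_A_sigma HlE => ha.
have sD' D : isd D -> isd (s D) by move/is_derE/sD/is_derE.
have sinj' D1 D2 : isd D1 -> isd D2 -> s D1 = s D2 -> D1 = D2.
  by move=> /is_derE h1 /is_derE h2; exact: sinj.
have sbr' D1 D2 : isd D1 -> isd D2 -> s (der_bracket D1 D2) = der_bracket (s D1) (s D2).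
  by move=> /is_derE h1 /is_derE h2; exact: sbr.
have ssurj' E : isd E -> exists2 D, isd D & s D = E.
  by move=> /is_derE/ssurj [D /is_derE hD <-]; exists D.
have zd := @zero_der K n.
have s0 : s (fun _ => 0) = (fun _ => 0).
  have h := slin 1 _ _ (proj2 (is_derE _) zd) (proj2 (is_derE _) zd).
  have e1 : der_add (der_scale 1 (fun _ : laurent K n => 0)) (fun _ => 0) = (fun _ => 0).
    by apply: functional_extensionality => f; rewrite /der_add /der_scale scaler0 addr0.
  have {}h := etrans (congr1 s (esym e1)) h; apply: functional_extensionality => f.
  have := congr1 (fun F => F f) h; rewrite /der_add /der_scale scale1r; exact: dbl0.
have sscale c D : isd D -> s (der_scale c D) = der_scale c (s D).
  move=> d; have h := slin c D _ (proj2 (is_derE _) d) (proj2 (is_derE _) zd).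
  have e : der_add (der_scale c D) (fun _ => 0) = der_scale c D.
    by apply: functional_extensionality => f; rewrite /der_add addr0.
  have {}h := etrans (congr1 s (esym e)) h.
  rewrite h; apply: functional_extensionality => f; rewrite s0.
  by rewrite /der_add addr0.
have Hd i : isd (Hl i) := @H_der K n i.
have nzE (E : laurent K n -> laurent K n) : isd E -> E <> (fun _ => 0) -> exists m p, (E (mono 1 m))@_p != 0.
  move=> d nz; apply: NNPP => hn; apply: nz; apply: functional_extensionality.
  apply: der_zero => // m; apply/malgP => p; rewrite mcoeff0; apply/eqP.
  by apply/negPn/negP => hp; apply: hn; exists m, p.
pose b (j : 'I_n) : 'rV[int]_n := delta_mx 0 j.
have dX j : isd (Eop (b j) j) := @E_der K n _ _.
have Xnz j : @Eop K n (b j) j <> (fun _ => 0).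
  move=> e; have := congr1 (fun F => F (mono 1 (b j))) e.
  rewrite /= Eop_mono => /eqP; apply/negP; apply: mono_neq0.
  by rewrite /b mxE !eqxx /= !mul1r oner_eq0.
have dir1 j : exists d : 'rV[int]_n,
    forall i, \sum_l a i l * (d ord0 l)%:~R = (b j ord0 i)%:~R.
  have dE := sD' _ (dX j).
  have Enz : s (Eop (b j) j) <> (fun _ => 0).
    move=> e0; apply: (Xnz j); apply: (sinj' _ _ (dX j) zd); by rewrite e0 s0.
  have [m [p hp]] := nzE _ dE Enz; exists (p - m) => i.
  apply: (weight (derZ dE) (mcoeff_sumZH (a i)) hp).
  have hb := sbr' _ _ (Hd i) (dX j).
  have e : der_bracket (@Hl K n i) (@Eop K n (b j) j) = der_scale (b j ord0 i)%:~R (Eop (b j) j).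
    by apply: functional_extensionality => f; rewrite /der_bracket /der_scale Eop_comm.
  rewrite e sscale // ha in hb.
  by have := congr1 (fun F => F (mono 1 m)) hb; rewrite /der_bracket /der_scale.
have dir2 i j : exists z : int, a i j = z%:~R.
  have [D dD sDX] := ssurj' _ (dX j).
  have hbr : s (der_bracket (@Hl K n i) D) = s (der_scale (a i j) D).
    rewrite sbr' // sscale // ha sDX; apply: functional_extensionality => f.
    rewrite /der_bracket /der_scale der_sum //.
    under [X in _ - X = _]eq_bigr do rewrite (derZ (dX j)).
    rewrite -sumrB.
    under eq_bigr do rewrite -scalerBr Eop_comm scalerA.
    rewrite -scaler_suml; congr (_ *: _).
    rewrite (bigD1 j) //= big1 ?addr0; first by rewrite /b mxE !eqxx mulr1.
    by move=> l /negPf hl; rewrite /b mxE hl andbF mulr0.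
  have e := sinj' _ _ (bracket_der (Hd i) dD) (scale_der _ dD) hbr.
  have Dnz : D <> (fun _ => 0).
    move=> e0; apply: (Xnz j); by rewrite -sDX e0 s0.
  have [m [p hp]] := nzE _ dD Dnz.
  exists ((p - m) ord0 i).
  have hL : forall (g : laurent K n) q,
      (Hl i g)@_q = (\sum_l (l == i)%:R * (q ord0 l)%:~R) * g@_q.
    move=> g q; rewrite mcoeffHl; congr (_ * _).
    rewrite (bigD1 i) //= eqxx mul1r big1 ?addr0 // => l /negPf ->; exact: mul0r.
  have heq : Hl i (D (mono 1 m)) - D (Hl i (mono 1 m)) = a i j *: D (mono 1 m).
    by have := congr1 (fun F => F (mono 1 m)) e; rewrite /der_bracket /der_scale.
  rewrite -(weight (derZ dD) hL hp heq).
  rewrite (bigD1 i) //= eqxx mul1r big1 ?addr0 // => l /negPf ->; exact: mul0r.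
pose A' : 'M[int]_n := \matrix_(i, j) proj1_sig (constructive_indefinite_description _ (dir2 i j)).
pose C : 'M[int]_n := \matrix_(l, j)
  (proj1_sig (constructive_indefinite_description _ (dir1 j))) ord0 l.
have aE : a = map_mx (fun z : int => z%:~R) A'.
  apply/matrixP => i j; rewrite !mxE.
  exact: (proj2_sig (constructive_indefinite_description _ (dir2 i j))).
have AC : A' *m C = 1%:M.
  apply/matrixP => i j; apply: (intr_inj0 hK).
  rewrite !mxE rmorph_sum /=.
  have := proj2_sig (constructive_indefinite_description _ (dir1 j)) i.
  set d := proj1_sig _ => hd.
  rewrite /b mxE eqxx /= in hd; rewrite -hd.
  apply: eq_bigr => l _; rewrite intrM /A' /C !mxE; congr (_ * _).
  exact: esym (proj2_sig (constructive_indefinite_description _ (dir2 i l))).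
have [Au _] := mulmx1_unit AC.
by exists A'.
Qed.
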